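(* Let $X$ be a compact metric space, let $f_1,f_2:X\to X$ be continuous, and let $F=\{f_1,f_2\}$. Suppose there is a point $c\in X$ with $f_1(x)=c$ for all $x\in X$ and $f_2(c)=c$. If $F$ has the (Hausdorff metric) shadowing property, then $f_2$ has the shadowing property. Likewise, if $F$ has the (Hausdorff metric) average shadowing property, then $f_2$ has the average shadowing property.
   Context: Throughout, $(X,d)$ is a compact metric space, $\mathbb{N}=\{0,1,2,\dots\}$ and $\mathbb{Z}^+=\{1,2,\dots\}$. $\mathbb{K}(X)$ denotes the set of nonempty compact subsets of $X$, equipped with the Hausdorff metric $d_H(A,B)=\max\{\sup_{a\in A}\inf_{b\in B}d(a,b),\sup_{b\in B}\inf_{a\in A}d(a,b)\}$. A point $x\in X$ is identified with $\{x\}\in\mathbb{K}(X)$. Multiple mappings: for continuous $f_1,f_2:X\to X$, $F=\{f_1,f_2\}$ maps $x\in X$ to $F(x)=\{f_1(x),f_2(x)\}\in\mathbb{K}(X)$. For $n\ge1$, $F^n(x)=\{f_{i_1}f_{i_2}\cdots f_{i_n}(x): i_1,\dots,i_n\in\{1,2\}\}$, and $F^0(x)=\{x\}$. For $A\in\mathbb{K}(X)$, $F^n(A)=\bigcup_{a\in A}F^n(a)\in\mathbb{K}(X)$. Shadowing of $F$: a sequence $\{A_n\}_{n\ge0}\subset\mathbb{K}(X)$ with $A_0$ a singleton is a $\delta$-pseudo orbit of $F$ if $d_H(F(A_n),A_{n+1})\le\delta$ for all $n\in\mathbb{N}$. $F$ has the shadowing property if for every $\epsilon>0$ there is $\delta>0$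 such that for every $\delta$-pseudo orbit $\{A_n\}$ of $F$ there is $y\in X$ with $d_H(F^n(y),A_n)<\epsilon$ for all $n\in\mathbb{N}$. Average shadowing of $F$: a sequence $\{A_n\}_{n\ge0}\subset\mathbb{K}(X)$ with $A_0$ a singleton is a $\delta$-average-pseudo-orbit of $F$ if there is $N(\delta)>0$ such that for all $n\ge N(\delta)$ and all $k\in\mathbb{Z}^+$, $\frac1n\sum_{i=0}^{n-1}d_H(F(A_{i+k}),A_{i+k+1})<\delta$. $F$ has the average shadowing property if for every $\epsilon>0$ there is $\delta>0$ such that for every $\delta$-average-pseudo-orbit $\{A_n\}$ of $F$ there is $y\in X$ with $\limsup_{n\to\infty}\frac1n\sum_{i=0}^{n-1}d_H(F^i(y),A_i)<\epsilon$. For a single continuous map $f:X\to X$: a $\delta$-pseudo orbit is $\{x_n\}_{n\ge0}\subset X$ with $d(f(x_n),x_{n+1})\le\delta$ for all $n$; $f$ has the shadowing property if for every $\epsilon>0$ there is $\delta>0$ such that every $\delta$-pseudo orbit $\{x_n\}$ admits $y\in X$ with $d(f^n(y),x_n)<\epsilon$ for all $n\in\mathbb{N}$. A $\delta$-average-pseudo-orbit of $f$ is $\{x_n\}_{n\ge0}$ such that there is $N(\delta)>0$ with $\frac1n\sum_{i=0}^{n-1}d(f(x_{i+k}),x_{i+k+1})<\delta$ for all $n\ge N(\delta)$, $k\in\mathbb{Z}^+$; $f$ has the average shadowing property if for every $\epsilon>0$ there is $\delta>0$ such that every $\delta$-average-pseudo-orbit $\{x_n\}$ admits $y\in X$ with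 $\limsup_{n\to\infty}\frac1n\sum_{i=0}^{n-1}d(f^i(y),x_i)<\epsilon$. *)

(* Defs.v *)
From HB Require Import structures.
From mathcomp Require Import all_boot all_order all_algebra.
From mathcomp Require Import all_classical all_reals all_analysis.
Set Implicit Arguments.
Unset Strict Implicit.
Unset Printing Implicit Defensive.
Import Order.TTheory GRing.Theory Num.Theory.
Local Open Scope classical_set_scope.
Local Open Scope ring_scope.

Section Defs.
Context {R : realType} {X : metricType R}.

Local Notation d := (@mdist R X).

Definition hdist (A B : set X) : R :=
  Num.max (sup [set inf [set d a b | b in B] | a in A])
          (sup [set inf [set d a b | a in A] | b in B]).

Definition Fpt (f1 f2 : X -> X) (x : X) : set X := [set f1 x; f2 x].

Definition Fset (f1 f2 : X -> X) (A : set X) : set X :=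
  \bigcup_(a in A) Fpt f1 f2 a.

(* F^n(x) = { f_{i1} f_{i2} ... f_{in} (x) : i1,...,in in {1,2} };
   a word [:: i1; ...; in] (true = index 1, false = index 2) acts by foldr,
   so f_{in} is applied first. F^0(x) = {x}. *)
Definition Fpow (f1 f2 : X -> X) (n : nat) (x : X) : set X :=
  [set foldr (fun (i : bool) z => if i then f1 z else f2 z) x w
     | w in [set w : seq bool | size w = n]].

Definition admissible_seq (A : nat -> set X) : Prop :=
  (forall n, compact (A n) /\ A n !=set0) /\ (exists x, A 0%N = [set x]).

Definition F_shadowing (f1 f2 : X -> X) : Prop :=
  forall eps : R, 0 < eps -> exists2 delta : R, 0 < delta &
    forall A : nat -> set X, admissible_seq A ->
      (forall n, hdist (Fset f1 f2 (A n)) (A n.+1) <= delta) ->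
      exists y : X, forall n, hdist (Fpow f1 f2 n y) (A n) < eps.

Definition F_avg_pseudo_orbit (f1 f2 : X -> X) (delta : R) (A : nat -> set X) : Prop :=
  admissible_seq A /\
  exists N : nat, (0 < N)%N /\
    forall n k : nat, (N <= n)%N -> (0 < k)%N ->
      n%:R^-1 * \sum_(i < n) hdist (Fset f1 f2 (A (i + k)%N)) (A (i + k).+1) < delta.

Definition F_avg_shadowing (f1 f2 : X -> X) : Prop :=
  forall eps : R, 0 < eps -> exists2 delta : R, 0 < delta &
    forall A : nat -> set X, F_avg_pseudo_orbit f1 f2 delta A ->
      exists y : X,
        (limn_esup (fun n : nat =>
           (n%:R^-1 * \sum_(i < n) hdist (Fpow f1 f2 i y) (A i))%:E)
         < eps%:E)%E.

Definition shadowing (f : X -> X) : Prop :=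
  forall eps : R, 0 < eps -> exists2 delta : R, 0 < delta &
    forall x : nat -> X, (forall n, d (f (x n)) (x n.+1) <= delta) ->
      exists y : X, forall n, d (iter n f y) (x n) < eps.

Definition avg_pseudo_orbit (f : X -> X) (delta : R) (x : nat -> X) : Prop :=
  exists N : nat, (0 < N)%N /\
    forall n k : nat, (N <= n)%N -> (0 < k)%N ->
      n%:R^-1 * \sum_(i < n) d (f (x (i + k)%N)) (x (i + k).+1) < delta.

Definition avg_shadowing (f : X -> X) : Prop :=
  forall eps : R, 0 < eps -> exists2 delta : R, 0 < delta &
    forall x : nat -> X, avg_pseudo_orbit f delta x ->
      exists y : X,
        (limn_esup (fun n : nat =>
           (n%:R^-1 * \sum_(i < n) d (iter i f y) (x i))%:E)
         < eps%:E)%E.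

End Defs.

(* Main.v *)
Require Import Defs.
From HB Require Import structures.
From mathcomp Require Import all_boot all_order all_algebra.
From mathcomp Require Import all_classical all_reals all_analysis.
From mathcomp Require Import lra.
Import Order.TTheory GRing.Theory Num.Theory.
Local Open Scope classical_set_scope.
Local Open Scope ring_scope.
Set Implicit Arguments.
Unset Strict Implicit.

Section Gen.
Context {R : realType} {X : metricType R}.
Local Notation d := (@mdist R X).

Lemma hdist_le (A B : set X) (r : R) :
  A !=set0 -> B !=set0 ->
  (forall a, A a -> exists2 b, B b & d a b <= r) ->
  (forall b, B b -> exists2 a, A a & d a b <= r) ->
  hdist A B <= r.
Proof.
move=> [a0 Aa0] [b0 Bb0] HA HB; rewrite /hdist ge_max; apply/andP; split.
- apply: ge_sup; first by exists (inf [set d a0 b | b in B]); exists a0.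
  move=> _ [a Aa <-]; have [b Bb dab] := HA a Aa.
  apply: le_trans dab; apply: ge_inf; last by exists b.
  by exists 0 => _ [z _ <-]; exact: mdist_ge0.
- apply: ge_sup; first by exists (inf [set d a b0 | a in A]); exists b0.
  move=> _ [b Bb <-]; have [a Aa dab] := HB b Bb.
  apply: le_trans dab; apply: ge_inf; last by exists a.
  by exists 0 => _ [z _ <-]; exact: mdist_ge0.
Qed.

Lemma hdist_lt1 (A B : set X) (e : R) a :
  B !=set0 -> (exists M, forall a, A a -> exists2 b, B b & d a b <= M) ->
  hdist A B < e -> A a -> exists2 b, B b & d a b < e.
Proof.
move=> B0 [M HM] he Aa.
have lb : has_lbound [set d a b | b in B].
  by exists 0 => _ [z _ <-]; exact: mdist_ge0.
have : inf [set d a b | b in B] < e.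
  apply: le_lt_trans he; apply: (@le_trans _ _ (sup [set inf [set d a b | b in B] | a in A])); last by rewrite le_max lexx.
  apply: ub_le_sup; last by exists a.
  exists M => _ [a' Aa' <-]; have [b Bb dab] := HM a' Aa'.
  apply: le_trans dab; apply: ge_inf; last by exists b.
  by exists 0 => _ [z _ <-]; exact: mdist_ge0.
case/inf_lt; first by case: B0 => b Bb; exists (d a b); exists b.
by move=> _ [b Bb <-] h; exists b.
Qed.

Lemma hdist_lt2 (A B : set X) (e : R) b :
  A !=set0 -> (exists M, forall b, B b -> exists2 a, A a & d a b <= M) ->
  hdist A B < e -> B b -> exists2 a, A a & d a b < e.
Proof.
move=> A0 [M HM] he Bb.
have : inf [set d a b | a in A] < e.
  apply: le_lt_trans he; apply: (@le_trans _ _ (sup [set inf [set d a b | a in A] | b in B])); last by rewrite le_max lexx orbT.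
  apply: ub_le_sup; last by exists b.
  exists M => _ [b' Bb' <-]; have [a Aa dab] := HM b' Bb'.
  apply: le_trans dab; apply: ge_inf; last by exists a.
  by exists 0 => _ [z _ <-]; exact: mdist_ge0.
case/inf_lt; first by case: A0 => a Aa; exists (d a b); exists a.
by move=> _ [a Aa <-] h; exists a.
Qed.

End Gen.

Section Spec.
Context {R : realType} {X : metricType R}.
Local Notation d := (@mdist R X).
Variables (f1 f2 : X -> X) (c : X).
Hypotheses (hc1 : forall x : X, f1 x = c) (hc2 : f2 c = c).

Lemma foldr_cases (y : X) w :
  foldr (fun (i : bool) z => if i then f1 z else f2 z) y w = iter (size w) f2 y
  \/ foldr (fun (i : bool) z => if i then f1 z else f2 z) y w = c.
Proof.
elim: w => [|b w IH] /=; first by left.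
case: b; first by right; rewrite hc1.
by case: IH => ->; [left|right].
Qed.

Lemma Fpow_sub n y z : Fpow f1 f2 n y z -> z = iter n f2 y \/ z = c.
Proof. by case=> w /= <- <-; exact: foldr_cases. Qed.

Lemma Fpow_iter n y : Fpow f1 f2 n y (iter n f2 y).
Proof.
exists (nseq n false); first by rewrite /= size_nseq.
by elim: n => //= n ->.
Qed.

Lemma Fpow_c n y : (0 < n)%N -> Fpow f1 f2 n y c.
Proof.
case: n => // n _; exists (true :: nseq n false); first by rewrite /= size_nseq.
by rewrite /= hc1.
Qed.

Variable x : nat -> X.
Definition Aseq (n : nat) : set X := if n is 0 then [set x 0%N] else [set c; x n].

Lemma Aseq_x n : Aseq n (x n).
Proof. by case: n => [|n] //=; right. Qed.

Lemma Aseq_cases n b : Aseq n b -> b = c \/ b = x n.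
Proof. by case: n => [|n] /=; [right|]. Qed.

Lemma Aseq_adm : admissible_seq Aseq.
Proof.
split; last by exists (x 0%N).
move=> n; split; last by exists (x n); exact: Aseq_x.
case: n => [|n] /=; first exact: compact_set1.
by apply: compactU; exact: compact_set1.
Qed.

Lemma Aseq_pseudo n :
  hdist (Fset f1 f2 (Aseq n)) (Aseq n.+1) <= d (f2 (x n)) (x n.+1).
Proof.
have Fc : Fset f1 f2 (Aseq n) c by exists (x n); [exact: Aseq_x| left; rewrite hc1].
apply: hdist_le.
- by exists c.
- by exists (x n.+1); exact: Aseq_x.
- move=> z [a Aa [->|->]].
    by exists c; [left|rewrite hc1 mdistxx mdist_ge0].
  case: (Aseq_cases Aa) => ->; last by exists (x n.+1) => //; right.
  by exists c; [left|rewrite hc2 mdistxx mdist_ge0].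
- move=> b [->|->].
    by exists c => //; rewrite mdistxx mdist_ge0.
  exists (f2 (x n)) => //; exists (x n); [exact: Aseq_x| by right].
Qed.

Lemma core y n :
  d (iter n f2 y) (x n) <= 2 * hdist (Fpow f1 f2 n y) (Aseq n).
Proof.
set h := hdist _ _.
have key : forall e, h < e -> d (iter n f2 y) (x n) < 2 * e.
  move=> e he.
  have ub1 : exists M, forall a, Fpow f1 f2 n y a -> exists2 b, Aseq n b & d a b <= M.
    exists (d (iter n f2 y) (x n) + d c (x n)) => a /Fpow_sub [->|->];
      (exists (x n); first exact: Aseq_x); [rewrite lerDl | rewrite lerDr]; exact: mdist_ge0.
  have ub2 : exists M, forall b, Aseq n b -> exists2 a, Fpow f1 f2 n y a & d a b <= M.
    exists (d (iter n f2 y) c + d (iter n f2 y) (x n)) => b Hb.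
    exists (iter n f2 y); first exact: Fpow_iter.
    by case: (Aseq_cases Hb) => ->; [rewrite lerDl | rewrite lerDr]; exact: mdist_ge0.
  have [b Hb db] := hdist_lt1 (Aseq_adm.1 n).2 ub1 he (Fpow_iter n y).
  have e0 : 0 < e by apply: le_lt_trans db; exact: mdist_ge0.
  case: (Aseq_cases Hb) => Eb; last first.
    by move: db; rewrite Eb => db; apply: (lt_le_trans db); lra.
  have [a Ha da] := hdist_lt2 (ex_intro _ _ (Fpow_iter n y)) ub2 he (Aseq_x n).
  case: (Fpow_sub Ha) => Ea; move: da; rewrite Ea => da.
    by apply: (lt_le_trans da); lra.
  move: db; rewrite Eb => db.
  apply: le_lt_trans (metric_triangle _ c _) _; lra.
apply/ler_addgt0Pr => t t0.
have := key (h + t / 2); rewrite ltrDl divr_gt0 // => /(_ isT) /ltW.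
move=> H; apply: (le_trans H); lra.
Qed.
End Spec.
Unset Implicit Arguments.
Set Strict Implicit.

Theorem theorem3p2 (R : realType) (X : metricType R)
    (hX : compact [set: X]) (f1 f2 : X -> X)
    (hf1 : continuous f1) (hf2 : continuous f2) (c : X)
    (hc1 : forall x : X, f1 x = c) (hc2 : f2 c = c) :
  (F_shadowing f1 f2 -> shadowing f2) /\
  (F_avg_shadowing f1 f2 -> avg_shadowing f2).
Proof.
split.
- move=> FS eps e0.
  have [del del0 H] := FS (eps / 2) ltac:(lra).
  exists del => // xs hx.
  have [y Hy] := H (Aseq c xs) (Aseq_adm c xs)
    (fun n => le_trans (Aseq_pseudo hc1 hc2 xs n) (hx n)).
  exists y => n; apply: (le_lt_trans (core hc1 hc2 xs y n)).
  have := Hy n; lra.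
- move=> FA eps e0.
  have [del del0 H] := FA (eps / 3) ltac:(lra).
  exists del => // xs [N [N0 HN]].
  have HNF : forall n k : nat, (N <= n)%N -> (0 < k)%N ->
      n%:R^-1 * \sum_(i < n) hdist (Fset f1 f2 (Aseq c xs (i + k)%N))
                                   (Aseq c xs (i + k).+1) < del.
    move=> n k Nn k0; apply: le_lt_trans (HN n k Nn k0).
    apply: ler_wpM2l; first by rewrite invr_ge0 ler0n.
    by apply: ler_sum => i _; exact: Aseq_pseudo.
  have [y Hy] := H (Aseq c xs) (conj (Aseq_adm c xs) (ex_intro _ N (conj N0 HNF))).
  exists y.
  move: Hy; rewrite /limn_esup /limf_esup.
  case/ereal_inf_lt => _ [V HV <-] hs.
  apply: (@le_lt_trans _ _ (ereal_sup [set (n%:R^-1 * \sum_(i < n) mdist (iter i f2 y) (xs i))%:E | n in V])).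
    by apply: ereal_inf_lbound; exists V.
  apply: (@le_lt_trans _ _ (2 * eps / 3)%:E); last by rewrite lte_fin; lra.
  apply: ge_ereal_sup => _ [n Vn <-]; rewrite lee_fin.
  have vn : n%:R^-1 * \sum_(i < n) hdist (Fpow f1 f2 i y) (Aseq c xs i) < eps / 3.
    rewrite -lte_fin; apply: le_lt_trans hs.
    by apply: ereal_sup_ubound; exists n.
  apply: (@le_trans _ _ (2 * (n%:R^-1 * \sum_(i < n) hdist (Fpow f1 f2 i y) (Aseq c xs i)))); last by lra.
  rewrite mulrCA; apply: ler_wpM2l; first by rewrite invr_ge0 ler0n.
  rewrite mulr_sumr; apply: ler_sum => i _; exact: core.
Qed.
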